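(* Let $\mu>0$, $u_a\in\mathbb{R}$, $\alpha_\pm\ge0$, $u_->u_+$, and Riemann data $(\alpha_0,u_0)=(\alpha_-,u_-)$ for $x<0$, $(\alpha_+,u_+)$ for $x>0$. Let $u_l(t)=u_a+(u_--u_a)e^{-\mu t}$, $u_r(t)=u_a+(u_+-u_a)e^{-\mu t}$, $\sigma(t)=u_a+\big(\frac{u_-+u_+}{2}-u_a\big)e^{-\mu t}$, $\xi(t)=u_at+\frac{u_-+u_+-2u_a}{2\mu}(1-e^{-\mu t})$, and $\omega(t)=\frac{(\alpha_++\alpha_-)(u_--u_+)}{2\mu}(1-e^{-\mu t})$. Then $\alpha=\alpha^0+\omega(t)\delta(x-\xi(t))$, $u=u^0$ with $(\alpha^0,u^0)(x,t)=(\alpha_-,u_l(t))$ for $x<\xi(t)$ and $(\alpha_+,u_r(t))$ for $x>\xi(t)$ is a $\delta$-shock solution of $\partial_t\alpha+\partial_x(\alpha u)=0$, $\partial_tu+\partial_x(\tfrac12u^2)=\mu(u_a-u)$ with these data and $\omega_0=0$, i.e. a weak solution satisfying Lax's entropy condition $u_r(t)<\sigma(t)<u_l(t)$ for all $t\ge0$.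
   Context: For $\psi\in\mathcal{C}_0^\infty(\mathbb{R}\times[0,\infty))$: $\langle\alpha,\psi\rangle=\int_0^\infty\int_{\mathbb{R}}\alpha^0\psi\,dx\,dt+\int_0^\infty\omega(t)\psi(\xi(t),t)dt$, $\langle\alpha u,\psi\rangle=\int_0^\infty\int_{\mathbb{R}}\alpha^0u^0\psi\,dx\,dt+\int_0^\infty\omega(t)\xi'(t)\psi(\xi(t),t)dt$. A weak solution with data $(\alpha_0,u_0)$ and initial weight $\omega_0$ means: for all such $\psi$, $\langle\alpha,\psi_t\rangle+\langle\alpha u,\psi_x\rangle=-\int\alpha_0\psi(x,0)dx-\omega_0\psi(\xi(0),0)$ and $\int_0^\infty\int\big(u\psi_t+\tfrac{u^2}{2}\psi_x+\mu(u_a-u)\psi\big)dx\,dt=-\int u_0\psi(x,0)dx$. *)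

(* Defs.v *)
From Stdlib Require Import Reals Lra ClassicalEpsilon.
Open Scope R_scope.

Definition Integrable (f : R -> R) (a b : R) : Prop :=
  inhabited (Riemann_integrable f a b).

(* Total Riemann integral: the Riemann integral when it exists, 0 otherwise
   (the value is independent of the integrability proof, RiemannInt_P5).
   Statements always assert integrability separately. *)
Definition RInt (f : R -> R) (a b : R) : R :=
  match excluded_middle_informative (Integrable f a b) with
  | left H =>
      RiemannInt (proj1_sig (constructive_indefinite_description
        (fun _ : Riemann_integrable f a b => True)
        (match H with inhabits pr => ex_intro _ pr I end)))
  | right _ => 0
  end.

Definition Int2 (F : R -> R -> R) (L T : R) : R :=
  RInt (fun t => RInt (fun x => F x t) (- L) L) 0 T.

Definition Integrable2 (F : R -> R -> R) (L T : R) : Prop :=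
  (forall t, 0 <= t <= T -> Integrable (fun x => F x t) (- L) L) /\
  Integrable (fun t => RInt (fun x => F x t) (- L) L) 0 T.

Definition cont2 (f : R -> R -> R) : Prop :=
  forall x t eps, 0 < eps -> exists d, 0 < d /\
    forall y s, Rabs (y - x) < d -> Rabs (s - t) < d ->
      Rabs (f y s - f x t) < eps.

(* C^infinity on R^2: f continuous, both first partial derivatives exist
   everywhere and are themselves C^infinity. *)
CoInductive smooth2 (f : R -> R -> R) : Prop :=
  smooth2_intro : forall fx ft : R -> R -> R,
    cont2 f ->
    (forall x t, derivable_pt_lim (fun y => f y t) x (fx x t)) ->
    (forall x t, derivable_pt_lim (fun s => f x s) t (ft x t)) ->
    smooth2 fx -> smooth2 ft -> smooth2 f.

(* Main.v *)
Require Import Defs.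
From Stdlib Require Import Reals.
Open Scope R_scope.
From Stdlib Require Import Lra FunctionalExtensionality ClassicalEpsilon.
From Coquelicot Require Coquelicot.

Module H.
Import Coquelicot.Coquelicot.

Ltac rring := repeat match goal with |- context [RInt ?f ?a ?b] => let r := fresh "r" in generalize (RInt f a b); intro r; change R in r end;
  match goal with |- ?a = ?b => change (@eq R a b) end; ring.

Lemma cont2_comp (f : R -> R -> R) (a b : R -> R) t :
  cont2 f -> continuity_pt a t -> continuity_pt b t ->
  continuity_pt (fun s => f (a s) (b s)) t.
Proof.
  intros Hf Ha Hb eps He.
  destruct (Hf (a t) (b t) eps He) as [d [Hd Hfd]].
  destruct (Ha d Hd) as [d1 [Hd1 H1]].
  destruct (Hb d Hd) as [d2 [Hd2 H2]].
  exists (Rmin d1 d2); split. apply Rmin_pos; auto.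
  intros x [Dx Hx]. simpl in *. unfold R_dist in *.
  apply Hfd.
  - apply (H1 x). split; auto. simpl. unfold R_dist. apply Rlt_le_trans with (1 := Hx). apply Rmin_l.
  - apply (H2 x). split; auto. simpl. unfold R_dist. apply Rlt_le_trans with (1 := Hx). apply Rmin_r.
Qed.

Lemma cont2_x (f : R -> R -> R) x t : cont2 f -> continuity_pt (fun y => f y t) x.
Proof.
  intros Hf. apply (cont2_comp f (fun y => y) (fun _ => t)); auto.
  apply continuity_pt_id. apply continuity_pt_const. intros u v; auto.
Qed.

Lemma cont2_t (f : R -> R -> R) x t : cont2 f -> continuity_pt (fun s => f x s) t.
Proof.
  intros Hf. apply (cont2_comp f (fun _ => x) (fun s => s)); auto.
  apply continuity_pt_const. intros u v; auto. apply continuity_pt_id.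
Qed.

Lemma cpt_cont (f : R -> R) x : continuity_pt f x -> continuous f x.
Proof. intros H. apply continuity_pt_filterlim. exact H. Qed.

Lemma exR_x (f : R -> R -> R) t a b : cont2 f -> ex_RInt (fun y => f y t) a b.
Proof. intros Hf. apply (@ex_RInt_continuous R_CompleteNormedModule). intros z _. apply cpt_cont, cont2_x, Hf. Qed.

Lemma cont2_swap (f : R -> R -> R) x t : cont2 f -> continuity_2d_pt (fun u v => f v u) t x.
Proof.
  intros Hf eps. destruct (Hf x t eps (cond_pos eps)) as [d [Hd Hfd]].
  exists (mkposreal d Hd). intros u v Hu Hv. apply Hfd; auto.
Qed.

Lemma A_deriv (g gt : R -> R -> R) (b : R -> R) (a t db : R) :
  cont2 g -> cont2 gt -> (forall x s, derivable_pt_lim (fun s => g x s) s (gt x s)) ->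
  derivable_pt_lim b t db ->
  is_derive (fun s => RInt (fun x => g x s) a (b s)) t
    (RInt (fun x => gt x t) a (b t) + g (b t) t * db).
Proof.
  intros Hg Hgt Hd Hb.
  assert (HD : forall u v, Derive (fun z => g v z) u = gt v u).
  { intros u v. apply is_derive_unique. apply is_derive_Reals. apply Hd. }
  assert (E : RInt (fun x => gt x t) a (b t) = RInt (fun x => Derive (fun u => g x u) t) a (b t)).
  { apply RInt_ext. intros; rewrite HD; auto. }
  rewrite E.
  apply (is_derive_RInt_param_bound_comp_aux3 (fun s x => g x s)).
  - apply filter_forall. intros; apply exR_x; auto.
  - exists (mkposreal 1 Rlt_0_1). apply filter_forall. intros; apply exR_x; auto.
  - apply is_derive_Reals; auto.
  - exists (mkposreal 1 Rlt_0_1). apply filter_forall. intros s x _.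
    exists (gt x s). apply is_derive_Reals. apply Hd.
  - intros x _. apply continuity_2d_pt_ext with (fun u v => gt v u).
    + intros; rewrite HD; auto.
    + apply cont2_swap; auto.
  - exists (mkposreal 1 Rlt_0_1). intros u v _ _.
    apply continuity_2d_pt_ext with (fun u v => gt v u).
    + intros; rewrite HD; auto.
    + apply cont2_swap; auto.
  - apply cont2_x; auto.
Qed.


Lemma DR (f : R -> R) a b : ex_RInt f a b -> Defs.RInt f a b = RInt f a b.
Proof.
  intros H. unfold Defs.RInt.
  destruct (excluded_middle_informative (Defs.Integrable f a b)) as [I|I].
  - symmetry. apply RInt_Reals.
  - exfalso. apply I. constructor. apply ex_RInt_Reals_0. exact H.
Qed.

Lemma DI (f : R -> R) a b : ex_RInt f a b -> Defs.Integrable f a b.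
Proof. intros H. constructor. apply ex_RInt_Reals_0. exact H. Qed.

Lemma RInt_zero (f : R -> R) a b : (forall x, Rmin a b < x < Rmax a b -> f x = 0) -> RInt f a b = 0.
Proof.
  intros H. rewrite (RInt_ext f (fun _ => 0)).
  - rewrite RInt_const. exact (Rmult_0_r (b - a)).
  - exact H.
Qed.

Lemma RInt_sc (f : R -> R) a b k : ex_RInt f a b -> RInt (fun x => k * f x) a b = k * RInt f a b.
Proof. intros H. exact (RInt_scal f a b k H). Qed.

Lemma RInt_pl (f g : R -> R) a b : ex_RInt f a b -> ex_RInt g a b ->
  RInt (fun x => f x + g x) a b = RInt f a b + RInt g a b.
Proof. intros H1 H2. exact (RInt_plus f g a b H1 H2). Qed.

Lemma exR_pl (f g : R -> R) a b : ex_RInt f a b -> ex_RInt g a b -> ex_RInt (fun x => f x + g x) a b.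
Proof. intros H1 H2. exact (ex_RInt_plus f g a b H1 H2). Qed.

Lemma exR_sc (f : R -> R) a b k : ex_RInt f a b -> ex_RInt (fun x => k * f x) a b.
Proof. intros H. exact (ex_RInt_scal f a b k H). Qed.

Lemma swapR (f : R -> R) a b : ex_RInt f a b -> RInt f b a = - RInt f a b.
Proof. intros H. rewrite <- (opp_RInt_swap f a b H). reflexivity. Qed.

Lemma chasR (f : R -> R) a b c : ex_RInt f a b -> ex_RInt f b c -> RInt f a b + RInt f b c = RInt f a c.
Proof. intros H1 H2. exact (RInt_Chasles f a b c H1 H2). Qed.

Lemma exc (f : R -> R) a b : (forall x, continuous f x) -> ex_RInt f a b.
Proof. intros H. apply (@ex_RInt_continuous R_CompleteNormedModule). auto. Qed.

Lemma piece (h F G : R -> R) c L : 0 < L -> (forall x, continuous F x) -> (forall x, continuous G x) ->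
  (forall x, L < Rabs x -> F x = 0 /\ G x = 0) ->
  (forall x, x < c -> h x = F x) -> (forall x, c <= x -> h x = G x) ->
  ex_RInt h (-L) L /\ RInt h (-L) L = RInt F (-L) c + RInt G c L.
Proof.
  intros HL CF CG V HF HG.
  assert (eF : forall a b, ex_RInt F a b) by (intros; apply exc; auto).
  assert (eG : forall a b, ex_RInt G a b) by (intros; apply exc; auto).
  destruct (Rle_dec c (-L)) as [H1|H1].
  - assert (E : forall x, Rmin (-L) L < x < Rmax (-L) L -> G x = h x).
    { intros x Hx. rewrite Rmin_left, Rmax_right in Hx by lra. rewrite HG; auto; lra. }
    split. { apply (ex_RInt_ext G); auto. }
    rewrite <- (RInt_ext G h); auto.
    rewrite (RInt_zero F). rewrite <- (chasR G c (-L) L); auto.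
    rewrite (RInt_zero G c (-L)). rring.
    + intros x Hx. rewrite Rmin_left, Rmax_right in Hx by lra.
      apply V. rewrite Rabs_left by lra. lra.
    + intros x Hx. rewrite Rmin_right, Rmax_left in Hx by lra.
      apply V. rewrite Rabs_left by lra. lra.
  - destruct (Rle_dec L c) as [H2|H2].
    + assert (E : forall x, Rmin (-L) L < x < Rmax (-L) L -> F x = h x).
      { intros x Hx. rewrite Rmin_left, Rmax_right in Hx by lra. rewrite HF; auto; lra. }
      split. { apply (ex_RInt_ext F); auto. }
      rewrite <- (RInt_ext F h); auto.
      rewrite (RInt_zero G). rewrite <- (chasR F (-L) L c); auto.
      rewrite (RInt_zero F L c). rring.
      * intros x Hx. rewrite Rmin_left, Rmax_right in Hx by lra.
        apply V. rewrite Rabs_right by lra. lra.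
      * intros x Hx. rewrite Rmin_right, Rmax_left in Hx by lra.
        apply V. rewrite Rabs_right by lra. lra.
    + assert (E1 : forall x, Rmin (-L) c < x < Rmax (-L) c -> F x = h x).
      { intros x Hx. rewrite Rmin_left, Rmax_right in Hx by lra. rewrite HF; auto; lra. }
      assert (E2 : forall x, Rmin c L < x < Rmax c L -> G x = h x).
      { intros x Hx. rewrite Rmin_left, Rmax_right in Hx by lra. rewrite HG; auto; lra. }
      assert (e1 : ex_RInt h (-L) c) by (apply (ex_RInt_ext F); auto).
      assert (e2 : ex_RInt h c L) by (apply (ex_RInt_ext G); auto).
      split. { apply (ex_RInt_Chasles h (-L) c L); auto. }
      rewrite <- (chasR h (-L) c L); auto.
      rewrite <- (RInt_ext F h), <- (RInt_ext G h); auto.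
Qed.

Lemma dlz (f : R -> R) x d : 0 < d -> (forall y, Rabs (y - x) < d -> f y = 0) -> derivable_pt_lim f x 0.
Proof.
  intros Hd Hf eps He. exists (mkposreal d Hd). intros h Hh0 Hh. simpl in Hh.
  rewrite (Hf (x + h)), (Hf x).
  - replace ((0 - 0) / h - 0) with 0 by (field; auto). rewrite Rabs_R0; auto.
  - replace (x - x) with 0 by ring. rewrite Rabs_R0; auto.
  - replace (x + h - x) with h by ring. auto.
Qed.

Lemma ftc2 (f fx : R -> R -> R) t a b : cont2 fx ->
  (forall x t, derivable_pt_lim (fun y => f y t) x (fx x t)) ->
  RInt (fun y => fx y t) a b = f b t - f a t.
Proof.
  intros C D. apply is_RInt_unique.
  apply (is_RInt_derive (fun y => f y t) (fun y => fx y t)).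
  - intros x _. apply is_derive_Reals. apply D.
  - intros x _. apply cpt_cont, cont2_x, C.
Qed.

Lemma exd_cpt (f : R -> R) x : ex_derive f x -> continuity_pt f x.
Proof. intros H. apply continuity_pt_filterlim. apply (@ex_derive_continuous R_AbsRing R_NormedModule). auto. Qed.

Lemma c2_of (f : R -> R -> R) : (forall x t, continuity_2d_pt f x t) -> cont2 f.
Proof.
  intros H x t eps He. destruct (H x t (mkposreal eps He)) as [d Hd].
  exists d; split. apply cond_pos. intros; apply Hd; auto.
Qed.

Lemma c2_to (f : R -> R -> R) x t : cont2 f -> continuity_2d_pt f x t.
Proof.
  intros H eps. destruct (H x t eps (cond_pos eps)) as [d [Hd Hf]].
  exists (mkposreal d Hd). intros; apply Hf; auto.
Qed.

Lemma c2_time (k : R -> R) x t : (forall s, continuity_pt k s) -> continuity_2d_pt (fun _ v => k v) x t.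
Proof. intros H. apply (continuity_1d_2d_pt_comp k (fun _ v => v)). apply H. apply continuity_2d_pt_id2. Qed.

Lemma combo1 (a c p om : R -> R) (da dc dp dom: R) k1 k2 t: is_derive a t da -> is_derive c t dc ->
  is_derive p t dp -> is_derive om t dom ->
  is_derive (fun s => k1 * a s - k2 * c s + om s * p s) t (k1*da - k2*dc + (dom * p t + om t * dp)).
Proof. intros Ha Hc Hp Ho. auto_derive.
 - repeat split; eexists; eauto.
 - repeat match goal with |- context [Derive ?g t] =>
     first [rewrite (is_derive_unique g t da Ha) | rewrite (is_derive_unique g t dc Hc)
           | rewrite (is_derive_unique g t dp Hp) | rewrite (is_derive_unique g t dom Ho)] end. ring.
Qed.

Lemma combo2 (a c u1 u2 : R -> R) (da dc du1 du2: R) t: is_derive a t da -> is_derive c t dc ->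
  is_derive u1 t du1 -> is_derive u2 t du2 ->
  is_derive (fun s => u1 s * a s - u2 s * c s) t (du1 * a t + u1 t * da - (du2 * c t + u2 t * dc)).
Proof. intros Ha Hc Hp Ho. auto_derive.
 - repeat split; eexists; eauto.
 - repeat match goal with |- context [Derive ?g t] =>
     first [rewrite (is_derive_unique g t da Ha) | rewrite (is_derive_unique g t dc Hc)
           | rewrite (is_derive_unique g t du1 Hp) | rewrite (is_derive_unique g t du2 Ho)] end. ring.
Qed.

Lemma ftcT (F Fd : R -> R) a b : (forall t, is_derive F t (Fd t)) -> (forall t, continuity_pt Fd t) ->
  RInt Fd a b = F b - F a.
Proof.
  intros D C. apply is_RInt_unique. apply (is_RInt_derive F Fd).
  - intros; auto. - intros; apply cpt_cont; auto.
Qed.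

Lemma exc' (f : R -> R) a b : (forall x, continuity_pt f x) -> ex_RInt f a b.
Proof. intros H. apply exc. intros; apply cpt_cont; auto. Qed.


Definition CRI (f : R -> R) (a b : R) : R := RInt f a b.

Lemma isd_eq (f : R -> R) x l l' : is_derive f x l -> l = l' -> is_derive f x l'.
Proof. intros H E; subst; auto. Qed.

Lemma RInt_pt0 (f : R -> R) a : RInt f a a = 0.
Proof. exact (RInt_point a f). Qed.

Lemma cpl (f g : R -> R) x : continuity_pt f x -> continuity_pt g x -> continuity_pt (fun y => f y + g y) x.
Proof. apply continuity_pt_plus. Qed.
Lemma cmi (f g : R -> R) x : continuity_pt f x -> continuity_pt g x -> continuity_pt (fun y => f y - g y) x.
Proof. apply continuity_pt_minus. Qed.
Lemma cml (f g : R -> R) x : continuity_pt f x -> continuity_pt g x -> continuity_pt (fun y => f y * g y) x.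
Proof. apply continuity_pt_mult. Qed.
Lemma cop (f : R -> R) x : continuity_pt f x -> continuity_pt (fun y => - f y) x.
Proof. apply continuity_pt_opp. Qed.
Lemma ccst (c x : R) : continuity_pt (fun _ => c) x.
Proof. apply continuity_pt_const. intros u v; auto. Qed.

Lemma combo3 (p q : R -> R) dp dq t : is_derive p t dp -> is_derive q t dq ->
  is_derive (fun s => p s + q s) t (dp + dq).
Proof. intros Hp Hq. auto_derive.
 - repeat split; eexists; eauto.
 - repeat match goal with |- context [Derive ?g t] =>
     first [rewrite (is_derive_unique g t dp Hp) | rewrite (is_derive_unique g t dq Hq)] end. ring.
Qed.

End H.

Module K.
Import Coquelicot.Coquelicot.
Import H.

Ltac c2t := solve [ apply continuity_2d_pt_const | apply c2_to; assumption
  | apply c2_time; solve [auto]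
  | apply continuity_2d_pt_mult; c2t | apply continuity_2d_pt_minus; c2t
  | apply continuity_2d_pt_plus; c2t | apply continuity_2d_pt_opp; c2t ].

Ltac ct := lazymatch goal with
 | |- continuity_pt (fun y => _ + _) _ => apply cpl; ct
 | |- continuity_pt (fun y => _ - _) _ => apply cmi; ct
 | |- continuity_pt (fun y => _ * _) _ => apply cml; ct
 | |- continuity_pt (fun y => - _) _ => apply cop; ct
 | |- _ => first [apply ccst | match goal with H : forall t, continuity_pt _ t |- _ => apply H end]
end.

Theorem core (mu ua am ap um up : R) :
  0 < mu -> 0 <= am -> 0 <= ap -> up < um ->
  let ul := fun t => ua + (um - ua) * exp (- (mu * t)) in
  let ur := fun t => ua + (up - ua) * exp (- (mu * t)) in
  let sigma := fun t => ua + ((um + up) / 2 - ua) * exp (- (mu * t)) in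
  let xi := fun t => ua * t + (um + up - 2 * ua) / (2 * mu) * (1 - exp (- (mu * t))) in
  let omega := fun t => (ap + am) * (um - up) / (2 * mu) * (1 - exp (- (mu * t))) in
  let omega0 := 0 in
  let alpha0 := fun x t => if Rlt_dec x (xi t) then am else ap in
  let u0 := fun x t => if Rlt_dec x (xi t) then ul t else ur t in
  let alpha_init := fun x => if Rlt_dec x 0 then am else ap in
  let u_init := fun x => if Rlt_dec x 0 then um else up in
  (forall t, 0 <= t -> ur t < sigma t < ul t) /\
  (forall (psi psix psit : R -> R -> R) (xi' : R -> R),
     smooth2 psi ->
     (forall x t, derivable_pt_lim (fun y => psi y t) x (psix x t)) ->
     (forall x t, derivable_pt_lim (fun s => psi x s) t (psit x t)) ->
     (forall t, derivable_pt_lim xi t (xi' t)) ->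
     forall L T, 0 < L -> 0 < T ->
     (forall x t, L <= Rabs x \/ T <= t -> psi x t = 0) ->
     Integrable2 (fun x t => alpha0 x t * psit x t) L T /\
     Integrable2 (fun x t => alpha0 x t * u0 x t * psix x t) L T /\
     Defs.Integrable (fun t => omega t * psit (xi t) t) 0 T /\
     Defs.Integrable (fun t => omega t * xi' t * psix (xi t) t) 0 T /\
     Defs.Integrable (fun x => alpha_init x * psi x 0) (- L) L /\
     Integrable2 (fun x t => u0 x t * psit x t + (u0 x t) ^ 2 / 2 * psix x t
                             + mu * (ua - u0 x t) * psi x t) L T /\
     Defs.Integrable (fun x => u_init x * psi x 0) (- L) L /\
     (Int2 (fun x t => alpha0 x t * psit x t) L T
        + Defs.RInt (fun t => omega t * psit (xi t) t) 0 T
      + (Int2 (fun x t => alpha0 x t * u0 x t * psix x t) L T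
        + Defs.RInt (fun t => omega t * xi' t * psix (xi t) t) 0 T)
      = - Defs.RInt (fun x => alpha_init x * psi x 0) (- L) L - omega0 * psi (xi 0) 0) /\
     Int2 (fun x t => u0 x t * psit x t + (u0 x t) ^ 2 / 2 * psix x t
                      + mu * (ua - u0 x t) * psi x t) L T
      = - Defs.RInt (fun x => u_init x * psi x 0) (- L) L).
Proof.
  intros Hmu Ham Hap Hu ul ur sigma xi omega omega0 alpha0 u0 alpha_init u_init.
  assert (Hexp : forall t, 0 < exp (- (mu * t))) by (intros; apply exp_pos).
  split.
  { intros t Ht. specialize (Hexp t). unfold ur, sigma, ul. split; nra. }
  intros psi psix psit xi' Hs Hpx Hpt Hxi L T HL HT Hsupp.
  destruct Hs as [fx ft C0 Dx Dt Sx St].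
  assert (psix = fx) by (extensionality x; extensionality t; eapply uniqueness_limite; eauto). subst fx.
  assert (psit = ft) by (extensionality x; extensionality t; eapply uniqueness_limite; eauto). subst ft.
  destruct Sx as [fxx fxt Cx _ Dxt _ Sxt]. destruct Sxt as [g1 g2 Cxt _ _ _ _].
  destruct St as [ftx ftt Ct _ Dtt _ Stt]. destruct Stt as [g3 g4 Ctt _ _ _ _].
  assert (Hxs : forall t, derivable_pt_lim xi t (sigma t)).
  { intros t. apply is_derive_Reals. unfold xi, sigma. auto_derive. auto. field. lra. }
  assert (xi' = sigma) by (extensionality t; eapply uniqueness_limite; eauto). subst xi'.

  assert (Vp : forall x t, L < Rabs x -> psi x t = 0) by (intros; apply Hsupp; left; lra).
  assert (Vpt : forall x t, L < Rabs x -> psit x t = 0).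
  { intros x t Hx. eapply uniqueness_limite. apply Hpt.
    assert (E : (fun s => psi x s) = fun _ => 0) by (extensionality s; apply Vp; auto).
    rewrite E. apply derivable_pt_lim_const. }
  assert (Vpx : forall x t, L < Rabs x -> psix x t = 0).
  { intros x t Hx. eapply uniqueness_limite. apply Hpx.
    apply dlz with (Rabs x - L). lra. intros y Hy. apply Vp.
    pose proof (Rabs_triang_inv x y). rewrite Rabs_minus_sym in Hy. lra. }
  assert (PT : forall x, psi x T = 0) by (intros; apply Hsupp; right; lra).
  assert (PL : forall t, psi L t = 0) by (intros; apply Hsupp; left; rewrite Rabs_right; lra).
  assert (PmL : forall t, psi (-L) t = 0) by (intros; apply Hsupp; left; rewrite Rabs_Ropp, Rabs_right; lra).
  assert (xi0 : xi 0 = 0) by (unfold xi; replace (- (mu * 0)) with 0 by ring; rewrite exp_0; field; lra).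
  assert (cxi : forall t, continuity_pt xi t) by (intros; apply derivable_continuous_pt; exists (sigma t); apply Hxs).
  assert (cul : forall t, continuity_pt ul t) by (intros; apply exd_cpt; unfold ul; auto_derive; auto).
  assert (cur : forall t, continuity_pt ur t) by (intros; apply exd_cpt; unfold ur; auto_derive; auto).
  assert (csig : forall t, continuity_pt sigma t) by (intros; apply exd_cpt; unfold sigma; auto_derive; auto).
  assert (com : forall t, continuity_pt omega t) by (intros; apply exd_cpt; unfold omega; auto_derive; auto).
  assert (cul2 : forall t, continuity_pt (fun t => ul t ^ 2 / 2) t) by (intros; apply exd_cpt; unfold ul; auto_derive; auto).
  assert (cur2 : forall t, continuity_pt (fun t => ur t ^ 2 / 2) t) by (intros; apply exd_cpt; unfold ur; auto_derive; auto).
  assert (dul : forall t, is_derive ul t (mu * (ua - ul t))) by (intros; unfold ul; auto_derive; auto; ring).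
  assert (dur : forall t, is_derive ur t (mu * (ua - ur t))) by (intros; unfold ur; auto_derive; auto; ring).
  assert (dom : forall t, is_derive omega t (am * (ul t - sigma t) + ap * (sigma t - ur t))).
  { intros; unfold omega, ul, ur, sigma; auto_derive; auto. field. lra. }
  assert (sig_id : forall t, sigma t = (ul t + ur t) / 2) by (intros; unfold sigma, ul, ur; field).
  assert (om0 : omega 0 = 0) by (unfold omega; replace (- (mu * 0)) with 0 by ring; rewrite exp_0; ring).
  assert (ul0 : ul 0 = um) by (unfold ul; replace (- (mu * 0)) with 0 by ring; rewrite exp_0; ring).
  assert (ur0 : ur 0 = up) by (unfold ur; replace (- (mu * 0)) with 0 by ring; rewrite exp_0; ring).
  clearbody ul ur sigma omega xi.
  pose (A := fun (g : R -> R -> R) t => CRI (fun x => g x t) (-L) (xi t)).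
  pose (C := fun (g : R -> R -> R) t => CRI (fun x => g x t) L (xi t)).
  pose (P := fun t => psi (xi t) t).
  assert (dA : forall g gt t, cont2 g -> cont2 gt -> (forall x s, derivable_pt_lim (fun s => g x s) s (gt x s)) ->
     is_derive (A g) t (A gt t + g (xi t) t * sigma t)).
  { intros. apply A_deriv; auto. }
  assert (dC : forall g gt t, cont2 g -> cont2 gt -> (forall x s, derivable_pt_lim (fun s => g x s) s (gt x s)) ->
     is_derive (C g) t (C gt t + g (xi t) t * sigma t)).
  { intros. apply A_deriv; auto. }
  assert (dP : forall t, is_derive P t (psit (xi t) t + psix (xi t) t * sigma t)).
  { intros t0.
    apply is_derive_ext with (fun t => psi (xi t0) t + RInt (fun x => psix x t) (xi t0) (xi t)).
    { intros t. unfold P. rewrite (ftc2 psi psix t); auto. rring. }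
    eapply isd_eq. apply combo3. apply is_derive_Reals. apply Dt.
    apply (A_deriv psix fxt xi (xi t0) t0 (sigma t0)); auto.
    rewrite RInt_pt0. rring. }
  assert (cA1 : forall t, continuity_pt (A psit) t) by (intros; apply exd_cpt; eexists; apply (dA psit ftt); eauto).
  assert (cC1 : forall t, continuity_pt (C psit) t) by (intros; apply exd_cpt; eexists; apply (dC psit ftt); eauto).
  assert (cA0 : forall t, continuity_pt (A psi) t) by (intros; apply exd_cpt; eexists; apply (dA psi psit); eauto).
  assert (cC0 : forall t, continuity_pt (C psi) t) by (intros; apply exd_cpt; eexists; apply (dC psi psit); eauto).
  assert (cP : forall t, continuity_pt P t) by (intros; apply exd_cpt; eexists; apply dP).
  assert (cpt : forall t, continuity_pt (fun t => psit (xi t) t) t).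
  { intros; apply cont2_comp; auto. apply continuity_pt_id. }
  assert (cpx : forall t, continuity_pt (fun t => psix (xi t) t) t).
  { intros; apply cont2_comp; auto. apply continuity_pt_id. }
  assert (I1 : forall t, ex_RInt (fun x => alpha0 x t * psit x t) (-L) L /\
     RInt (fun x => alpha0 x t * psit x t) (-L) L = am * A psit t + ap * - C psit t).
  { intros t.
    destruct (piece (fun x => alpha0 x t * psit x t) (fun x => am * psit x t) (fun x => ap * psit x t) (xi t) L HL) as [e E].
    - intros x. apply cpt_cont. apply (cont2_x (fun x t => am * psit x t)). apply c2_of; intros; c2t.
    - intros x. apply cpt_cont. apply (cont2_x (fun x t => ap * psit x t)). apply c2_of; intros; c2t.
    - intros x Hx. rewrite Vpt by auto. split; ring.
    - intros x Hx. unfold alpha0. destruct (Rlt_dec x (xi t)); [reflexivity | lra].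
    - intros x Hx. unfold alpha0. destruct (Rlt_dec x (xi t)); [lra | reflexivity].
    - split; [exact e|]. rewrite E. unfold A, C, CRI.
      rewrite (RInt_sc (fun x => psit x t)), (RInt_sc (fun x => psit x t)), (swapR (fun x => psit x t) L (xi t)).
      rring. all: apply exR_x; auto. }
  assert (I2 : forall t, ex_RInt (fun x => alpha0 x t * u0 x t * psix x t) (-L) L /\
     RInt (fun x => alpha0 x t * u0 x t * psix x t) (-L) L = am * ul t * P t + ap * ur t * - P t).
  { intros t.
    destruct (piece (fun x => alpha0 x t * u0 x t * psix x t) (fun x => am * ul t * psix x t) (fun x => ap * ur t * psix x t) (xi t) L HL) as [e E].
    - intros x. apply cpt_cont. apply (cont2_x (fun x t => am * ul t * psix x t)). apply c2_of; intros; c2t.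
    - intros x. apply cpt_cont. apply (cont2_x (fun x t => ap * ur t * psix x t)). apply c2_of; intros; c2t.
    - intros x Hx. rewrite Vpx by auto. split; ring.
    - intros x Hx. unfold alpha0, u0. destruct (Rlt_dec x (xi t)); [reflexivity | lra].
    - intros x Hx. unfold alpha0, u0. destruct (Rlt_dec x (xi t)); [lra | reflexivity].
    - split; [exact e|]. rewrite E. unfold P.
      rewrite (RInt_sc (fun x => psix x t)), (RInt_sc (fun x => psix x t)).
      rewrite !(ftc2 psi psix t); auto. rewrite PL, PmL. rring. all: apply exR_x; auto. }
  assert (I3 : forall t, ex_RInt (fun x => u0 x t * psit x t + (u0 x t) ^ 2 / 2 * psix x t
                             + mu * (ua - u0 x t) * psi x t) (-L) L /\
     RInt (fun x => u0 x t * psit x t + (u0 x t) ^ 2 / 2 * psix x t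
                             + mu * (ua - u0 x t) * psi x t) (-L) L =
     ul t * A psit t + ul t ^ 2 / 2 * P t + mu * (ua - ul t) * A psi t
     + (ur t * - C psit t + ur t ^ 2 / 2 * - P t + mu * (ua - ur t) * - C psi t)).
  { intros t.
    destruct (piece (fun x => u0 x t * psit x t + (u0 x t) ^ 2 / 2 * psix x t + mu * (ua - u0 x t) * psi x t)
      (fun x => ul t * psit x t + ul t ^ 2 / 2 * psix x t + mu * (ua - ul t) * psi x t)
      (fun x => ur t * psit x t + ur t ^ 2 / 2 * psix x t + mu * (ua - ur t) * psi x t) (xi t) L HL) as [e E].
    - intros x. apply cpt_cont. apply (cont2_x (fun x t => ul t * psit x t + ul t ^ 2 / 2 * psix x t + mu * (ua - ul t) * psi x t)). apply c2_of; intros; c2t.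
    - intros x. apply cpt_cont. apply (cont2_x (fun x t => ur t * psit x t + ur t ^ 2 / 2 * psix x t + mu * (ua - ur t) * psi x t)). apply c2_of; intros; c2t.
    - intros x Hx. rewrite Vpt, Vpx, Vp by auto. split; ring.
    - intros x Hx. unfold u0. destruct (Rlt_dec x (xi t)); [reflexivity | lra].
    - intros x Hx. unfold u0. destruct (Rlt_dec x (xi t)); [lra | reflexivity].
    - split; [exact e|]. rewrite E. unfold A, C, P, CRI.
      assert (exl1 : forall (g : R->R->R) k a b, cont2 g -> ex_RInt (fun x => k * g x t) a b) by (intros; apply exR_sc; apply exR_x; auto).
      assert (exl2 : forall (g h : R->R->R) k1 k2 a b, cont2 g -> cont2 h -> ex_RInt (fun x => k1 * g x t + k2 * h x t) a b) by (intros; apply exR_pl; apply exR_sc; apply exR_x; auto).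
      assert (ex1 : forall (g : R -> R -> R) a b, cont2 g -> ex_RInt (fun x => g x t) a b) by (intros; apply exR_x; auto).
      rewrite (RInt_pl (fun x => ul t * psit x t + ul t ^ 2 / 2 * psix x t) (fun x => mu * (ua - ul t) * psi x t)).
      rewrite (RInt_pl (fun x => ul t * psit x t) (fun x => ul t ^ 2 / 2 * psix x t)).
      rewrite (RInt_pl (fun x => ur t * psit x t + ur t ^ 2 / 2 * psix x t) (fun x => mu * (ua - ur t) * psi x t)).
      rewrite (RInt_pl (fun x => ur t * psit x t) (fun x => ur t ^ 2 / 2 * psix x t)).
      rewrite (RInt_sc (fun x => psit x t) (-L) (xi t) (ul t)), (RInt_sc (fun x => psix x t) (-L) (xi t) (ul t ^ 2 / 2)),
        (RInt_sc (fun x => psi x t) (-L) (xi t) (mu * (ua - ul t))).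
      rewrite (RInt_sc (fun x => psit x t) (xi t) L (ur t)), (RInt_sc (fun x => psix x t) (xi t) L (ur t ^ 2 / 2)),
        (RInt_sc (fun x => psi x t) (xi t) L (mu * (ua - ur t))).
      rewrite (ftc2 psi psix t (-L) (xi t)), (ftc2 psi psix t (xi t) L); auto. rewrite PL, PmL.
      rewrite (swapR (fun x => psit x t) L (xi t)), (swapR (fun x => psi x t) L (xi t)).
      rring.
      all: try (apply (ex1 psi); assumption). all: try (apply (ex1 psix); assumption). all: try (apply (ex1 psit); assumption).
      all: lazymatch goal with
        | |- ex_RInt (fun x => _ * ?g x _ + _ * ?h x _) _ _ => apply (exl2 g h); assumption
        | |- ex_RInt (fun x => _ * ?g x _) _ _ => apply (exl1 g); assumption
        end. }

  assert (J1 : ex_RInt (fun x => alpha_init x * psi x 0) (-L) L /\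
     RInt (fun x => alpha_init x * psi x 0) (-L) L = am * A psi 0 + ap * - C psi 0).
  { destruct (piece (fun x => alpha_init x * psi x 0) (fun x => am * psi x 0) (fun x => ap * psi x 0) 0 L HL) as [e E].
    - intros x. apply cpt_cont. apply (cont2_x (fun x t => am * psi x t)). apply c2_of; intros; c2t.
    - intros x. apply cpt_cont. apply (cont2_x (fun x t => ap * psi x t)). apply c2_of; intros; c2t.
    - intros x Hx. rewrite Vp by auto. split; ring.
    - intros x Hx. unfold alpha_init. destruct (Rlt_dec x 0); [reflexivity | lra].
    - intros x Hx. unfold alpha_init. destruct (Rlt_dec x 0); [lra | reflexivity].
    - split; [exact e|]. rewrite E. unfold A, C, CRI. rewrite xi0.
      rewrite (RInt_sc (fun x => psi x 0)), (RInt_sc (fun x => psi x 0)), (swapR (fun x => psi x 0) L 0).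
      rring. all: apply exR_x; auto. }
  assert (J2 : ex_RInt (fun x => u_init x * psi x 0) (-L) L /\
     RInt (fun x => u_init x * psi x 0) (-L) L = um * A psi 0 + up * - C psi 0).
  { destruct (piece (fun x => u_init x * psi x 0) (fun x => um * psi x 0) (fun x => up * psi x 0) 0 L HL) as [e E].
    - intros x. apply cpt_cont. apply (cont2_x (fun x t => um * psi x t)). apply c2_of; intros; c2t.
    - intros x. apply cpt_cont. apply (cont2_x (fun x t => up * psi x t)). apply c2_of; intros; c2t.
    - intros x Hx. rewrite Vp by auto. split; ring.
    - intros x Hx. unfold u_init. destruct (Rlt_dec x 0); [reflexivity | lra].
    - intros x Hx. unfold u_init. destruct (Rlt_dec x 0); [lra | reflexivity].
    - split; [exact e|]. rewrite E. unfold A, C, CRI. rewrite xi0.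
      rewrite (RInt_sc (fun x => psi x 0)), (RInt_sc (fun x => psi x 0)), (swapR (fun x => psi x 0) L 0).
      rring. all: apply exR_x; auto. }
  assert (AT : A psi T = 0) by (unfold A, CRI; apply RInt_zero; intros; apply PT).
  assert (CT : C psi T = 0) by (unfold C, CRI; apply RInt_zero; intros; apply PT).
  assert (PTT : P T = 0) by (unfold P; apply PT).
  assert (eqP : forall t, P t = psi (xi t) t) by reflexivity.
  clearbody A C P.
  assert (E1 : (fun t => Defs.RInt (fun x => alpha0 x t * psit x t) (-L) L) = (fun t => am * A psit t + ap * - C psit t)).
  { extensionality t. rewrite DR by apply I1. apply I1. }
  assert (E2 : (fun t => Defs.RInt (fun x => alpha0 x t * u0 x t * psix x t) (-L) L) = (fun t => am * ul t * P t + ap * ur t * - P t)).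
  { extensionality t. rewrite DR by apply I2. apply I2. }
  assert (E3 : (fun t => Defs.RInt (fun x => u0 x t * psit x t + (u0 x t) ^ 2 / 2 * psix x t
                             + mu * (ua - u0 x t) * psi x t) (-L) L) =
     (fun t => ul t * A psit t + ul t ^ 2 / 2 * P t + mu * (ua - ul t) * A psi t
     + (ur t * - C psit t + ur t ^ 2 / 2 * - P t + mu * (ua - ur t) * - C psi t))).
  { extensionality t. rewrite DR by apply I3. apply I3. }
  unfold Integrable2, Int2. cbv beta. rewrite E1, E2, E3.
  split. { split. intros t _; apply DI; apply I1. apply DI, exc'. intros; ct. }
  split. { split. intros t _; apply DI; apply I2. apply DI, exc'. intros; ct. }
  split. { apply DI, exc'. intros; ct. }
  split. { apply DI, exc'. intros; ct. }
  split. { apply DI; apply J1. }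
  split. { split. intros t _; apply DI; apply I3. apply DI, exc'. intros; ct. }
  split. { apply DI; apply J2. }

  assert (cE : forall (f : R -> R) a b, (forall t, continuity_pt f t) -> ex_RInt f a b) by (intros; apply exc'; auto).
  split.
  - rewrite (DR (fun t => am * A psit t + ap * - C psit t)) by (apply cE; intros; ct).
    rewrite (DR (fun t => am * ul t * P t + ap * ur t * - P t)) by (apply cE; intros; ct).
    rewrite (DR (fun t => omega t * psit (xi t) t)) by (apply cE; intros; ct).
    rewrite (DR (fun t => omega t * sigma t * psix (xi t) t)) by (apply cE; intros; ct).
    rewrite (DR (fun x => alpha_init x * psi x 0)) by apply J1.
    rewrite (proj2 J1).
    rewrite <- (RInt_pl (fun t => am * A psit t + ap * - C psit t) (fun t => omega t * psit (xi t) t)) by (apply cE; intros; ct).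
    rewrite <- (RInt_pl (fun t => am * ul t * P t + ap * ur t * - P t) (fun t => omega t * sigma t * psix (xi t) t)) by (apply cE; intros; ct).
    rewrite <- RInt_pl by (apply cE; intros; ct).
    rewrite (ftcT (fun s => am * A psi s - ap * C psi s + omega s * P s)).
    + rewrite AT, CT, PTT, om0. unfold omega0. rring.
    + intros t. eapply isd_eq.
      { apply combo1; [apply (dA psi psit) | apply (dC psi psit) | apply dP | apply dom]; auto. }
      rewrite !eqP. rring.
    + intros; ct.
  - rewrite (DR (fun t => ul t * A psit t + ul t ^ 2 / 2 * P t + mu * (ua - ul t) * A psi t
     + (ur t * - C psit t + ur t ^ 2 / 2 * - P t + mu * (ua - ur t) * - C psi t))) by (apply cE; intros; ct).
    rewrite (DR (fun x => u_init x * psi x 0)) by apply J2.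
    rewrite (proj2 J2).
    rewrite (ftcT (fun s => ul s * A psi s - ur s * C psi s)).
    + rewrite AT, CT, ul0, ur0. rring.
    + intros t. eapply isd_eq.
      { apply combo2; [apply (dA psi psit) | apply (dC psi psit) | apply dul | apply dur]; auto. }
      rewrite !eqP, sig_id. match goal with |- ?a = ?b => change (@eq R a b) end; field.
    + intros; ct.
Qed.
End K.

Theorem mainTheorem7 (mu ua am ap um up : R) :
  0 < mu -> 0 <= am -> 0 <= ap -> up < um ->
  let ul := fun t => ua + (um - ua) * exp (- (mu * t)) in
  let ur := fun t => ua + (up - ua) * exp (- (mu * t)) in
  let sigma := fun t => ua + ((um + up) / 2 - ua) * exp (- (mu * t)) in
  let xi := fun t => ua * t + (um + up - 2 * ua) / (2 * mu) * (1 - exp (- (mu * t))) in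
  let omega := fun t => (ap + am) * (um - up) / (2 * mu) * (1 - exp (- (mu * t))) in
  let omega0 := 0 in
  (* regular parts (alpha^0, u^0) *)
  let alpha0 := fun x t => if Rlt_dec x (xi t) then am else ap in
  let u0 := fun x t => if Rlt_dec x (xi t) then ul t else ur t in
  (* Riemann initial data *)
  let alpha_init := fun x => if Rlt_dec x 0 then am else ap in
  let u_init := fun x => if Rlt_dec x 0 then um else up in
  (* Lax entropy condition *)
  (forall t, 0 <= t -> ur t < sigma t < ul t) /\
  (* weak solution: for every test function psi in C_0^infty *)
  (forall (psi psix psit : R -> R -> R) (xi' : R -> R),
     smooth2 psi ->
     (forall x t, derivable_pt_lim (fun y => psi y t) x (psix x t)) ->
     (forall x t, derivable_pt_lim (fun s => psi x s) t (psit x t)) ->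
     (forall t, derivable_pt_lim xi t (xi' t)) ->
     forall L T, 0 < L -> 0 < T ->
     (forall x t, L <= Rabs x \/ T <= t -> psi x t = 0) ->
     (* all integrals below exist *)
     Integrable2 (fun x t => alpha0 x t * psit x t) L T /\
     Integrable2 (fun x t => alpha0 x t * u0 x t * psix x t) L T /\
     Integrable (fun t => omega t * psit (xi t) t) 0 T /\
     Integrable (fun t => omega t * xi' t * psix (xi t) t) 0 T /\
     Integrable (fun x => alpha_init x * psi x 0) (- L) L /\
     Integrable2 (fun x t => u0 x t * psit x t + (u0 x t) ^ 2 / 2 * psix x t
                             + mu * (ua - u0 x t) * psi x t) L T /\
     Integrable (fun x => u_init x * psi x 0) (- L) L /\
     (* <alpha, psi_t> + <alpha u, psi_x> = - int alpha_0 psi(x,0) - omega_0 psi(xi(0),0) *)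
     (Int2 (fun x t => alpha0 x t * psit x t) L T
        + RInt (fun t => omega t * psit (xi t) t) 0 T
      + (Int2 (fun x t => alpha0 x t * u0 x t * psix x t) L T
        + RInt (fun t => omega t * xi' t * psix (xi t) t) 0 T)
      = - RInt (fun x => alpha_init x * psi x 0) (- L) L - omega0 * psi (xi 0) 0) /\
     (* second equation *)
     Int2 (fun x t => u0 x t * psit x t + (u0 x t) ^ 2 / 2 * psix x t
                      + mu * (ua - u0 x t) * psi x t) L T
      = - RInt (fun x => u_init x * psi x 0) (- L) L).
Proof. exact (K.core mu ua am ap um up). Qed.
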